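(* Let $m\ge 4$, $t$, $g$ be positive integers with $t\ge g+1$, and put $\alpha=(t-1)-g$. Consider a bin configuration of the game $G(m,t,g)$ in which every current bin load is at most $t-1$. Suppose there are two distinct bins $A,B$ such that both of the following hold: 1. the sum of the loads of all bins other than $A$ and $B$ is at least $(m-2)g-2\alpha-1$; 2. there is a bin $C\notin\{A,B\}$ whose load is strictly less than $\alpha$. Then Algorithm wins from this configuration.
   Context: Bin stretching game $G(m,t,g)$: there are $m$ bins. In each round Adversary presents an item of positive integer size, and Algorithm then irrevocably places it into one of the $m$ bins. The load of a bin is the total size of the items in it. A bin configuration consists of: - the current loads $L_1,\dots,L_m$ of the bins, and - the multiset $\mathcal I$ of items presented so far, placed so that the bins have exactly these loads. ''Algorithm wins from this configuration'' means the following. There is an online rule which, given the configuration and the items presented so far, assigns each newly presented item to a bin. This rule must guarantee: for every finite sequence $e_1,\dots,e_j$ of further positive-integer items such that the multiset $\mathcal I\cup\{e_1,\dots,e_j\}$ can be partitioned into $m$ parts each of total size at most $g$, every bin load is at most $t-1$ after these items are placed. *)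

(* Defs.v *)
From mathcomp Require Import all_boot.
Set Implicit Arguments. Unset Strict Implicit. Unset Printing Implicit Defensive.

(* A bin configuration: loads L over m bins and item list I (a multiset,
   given as a sequence) together with some placement of I yielding L. *)
Definition is_config (m : nat) (L : 'I_m -> nat) (I : seq nat) : Prop :=
  all (fun e => 0 < e) I /\
  exists pl : 'I_(size I) -> 'I_m,
    forall b : 'I_m, L b = \sum_(i < size I | pl i == b) nth 0 I i.

Definition packable (m g : nat) (s : seq nat) : Prop :=
  exists a : 'I_(size s) -> 'I_m,
    forall b : 'I_m, \sum_(i < size s | a i == b) nth 0 s i <= g.

(* Load of bin b after the new items es have been placed by the online rule f:
   the k-th new item (0-based) is placed into bin f (take k.+1 es), i.e. the
   rule sees all new items presented so far, including the current one. *)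
Definition load_after (m : nat) (L : 'I_m -> nat) (f : seq nat -> 'I_m)
    (es : seq nat) (b : 'I_m) : nat :=
  L b + \sum_(k < size es | f (take k.+1 es) == b) nth 0 es k.

Definition alg_wins (m t g : nat) (L : 'I_m -> nat) (I : seq nat) : Prop :=
  exists f : seq nat -> 'I_m,
    forall es : seq nat,
      all (fun e => 0 < e) es ->
      packable m g (I ++ es) ->
      forall b : 'I_m, load_after L f es b <= t - 1.

(* Main.v *)
Require Import Defs.
From mathcomp Require Import all_boot.
From mathcomp Require Import zify.
Set Implicit Arguments. Unset Strict Implicit. Unset Printing Implicit Defensive.

Definition stepAB (tt : nat) (p : nat * nat) (x : nat) : nat * nat :=
  if p.1 + x <= tt then (p.1 + x, p.2)
  else if p.2 + x <= tt then (p.1, p.2 + x) else p.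

Definition runAB tt a0 b0 (s : seq nat) := foldl (stepAB tt) (a0, b0) s.

Definition chooseABC m (A B C : 'I_m) tt (p : nat * nat) (x : nat) : 'I_m :=
  if p.1 + x <= tt then A else if p.2 + x <= tt then B else C.

Definition ruleABC m (A B C : 'I_m) tt a0 b0 (s : seq nat) : 'I_m :=
  chooseABC A B C tt (runAB tt a0 b0 (take (size s).-1 s)) (last 0 s).

Lemma rule_rcons m (A B C : 'I_m) tt a0 b0 s x :
  ruleABC A B C tt a0 b0 (rcons s x) = chooseABC A B C tt (runAB tt a0 b0 s) x.
Proof.
by rewrite /ruleABC size_rcons /= -cats1 take_size_cat // cats1 last_rcons.
Qed.

Lemma load_rcons m (L : 'I_m -> nat) f es x d :
  load_after L f (rcons es x) d =
  load_after L f es d + (if f (rcons es x) == d then x else 0).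
Proof.
rewrite /load_after -addnA; congr (_ + _).
rewrite -(big_mkord (fun k => f (take k.+1 (rcons es x)) == d) (fun k => nth 0 (rcons es x) k)).
rewrite -(big_mkord (fun k => f (take k.+1 es) == d) (fun k => nth 0 es k)) size_rcons.
rewrite big_mkcond big_nat_recr //= [in RHS]big_mkcond /=.
congr (_ + _).
  apply: eq_big_nat => i /andP[_ lt].
  by rewrite -cats1 takel_cat // nth_cat lt.
by rewrite -[(size es).+1](size_rcons es x) take_size nth_rcons ltnn eqxx.
Qed.

Lemma sum_nth_sumn (s : seq nat) : \sum_(i < size s) nth 0 s i = sumn s.
Proof. by rewrite sumnE (big_nth 0) big_mkord. Qed.

Lemma config_sum m (L : 'I_m -> nat) I : is_config L I -> \sum_(b : 'I_m) L b = sumn I.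
Proof.
case=> _ [pl H]; rewrite -sum_nth_sumn (partition_big pl xpredT) //=.
by apply: eq_bigr => b _; rewrite H.
Qed.

Lemma pack_sum m g s : packable m g s -> sumn s <= m * g.
Proof.
case=> a H; rewrite -sum_nth_sumn (partition_big a xpredT) //=.
apply: (@leq_trans (\sum_(b : 'I_m) g)); first by apply: leq_sum => b _; exact: H b.
by rewrite sum_nat_const card_ord mulnC.
Qed.

Lemma pack_le m g s : packable m g s -> all (fun e => e <= g) s.
Proof.
case=> a H; apply/(all_nthP 0) => i lt.
have := H (a (Ordinal lt)); rewrite (bigD1 (Ordinal lt)) //=.
by move/(leq_trans (leq_addr _ _)).
Qed.

Lemma inv_main m (L : 'I_m -> nat) (A B C : 'I_m) tt g (f : seq nat -> 'I_m) :
  f =1 ruleABC A B C tt (L A) (L B) ->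
  A != B -> C != A -> C != B -> L A <= tt -> L B <= tt -> L C + g <= tt ->
  forall es, L A + L B + sumn es <= tt + tt + 1 -> all (fun e => e <= g) es ->
  [/\ load_after L f es A = (runAB tt (L A) (L B) es).1,
      load_after L f es B = (runAB tt (L A) (L B) es).2,
     (forall d, d != A -> d != B -> d != C -> load_after L f es d = L d),
     (runAB tt (L A) (L B) es).1 <= tt & [/\ (runAB tt (L A) (L B) es).2 <= tt,
     L C <= load_after L f es C, load_after L f es C <= tt,
     (runAB tt (L A) (L B) es).1 + (runAB tt (L A) (L B) es).2
        + (load_after L f es C - L C) = L A + L B + sumn es &
     (load_after L f es C = L C \/
        tt < (runAB tt (L A) (L B) es).1 + (load_after L f es C - L C))]].
Proof.
move=> Hf AB CA CB hA hB hC; elim/last_ind => [|es x IH] Hv Hall.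
  rewrite /= /load_after !big_ord0 !addn0; do 4?split=> //=; try lia.
  by move=> d *; rewrite big_ord0 addn0.
rewrite sumn_rcons in Hv; rewrite all_rcons in Hall; case/andP: Hall => hx Hall.
have [IA IB Id Ia [Ib IC0 IC IS IG]] := IH ltac:(lia) Hall.
have Hd : forall d, d != A -> d != B -> d != C -> load_after L f (rcons es x) d = L d.
  move=> d dA dB dC; rewrite load_rcons (Id d dA dB dC) Hf rule_rcons /chooseABC.
  case: ((runAB tt (L A) (L B) es).1 + x <= tt);
    [|case: ((runAB tt (L A) (L B) es).2 + x <= tt)]; by rewrite ?(eq_sym A d) ?(eq_sym B d)
    ?(eq_sym C d) ?(negbTE dA) ?(negbTE dB) ?(negbTE dC) addn0.
rewrite sumn_rcons /runAB foldl_rcons -/(runAB tt (L A) (L B) es) !load_rcons Hf rule_rcons.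
have eAB : (A == B) = false by apply/negbTE.
have eBA : (B == A) = false by rewrite eq_sym.
have eCA : (C == A) = false by apply/negbTE.
have eCB : (C == B) = false by apply/negbTE.
have eAC : (A == C) = false by rewrite eq_sym.
have eBC : (B == C) = false by rewrite eq_sym.
move: IA IB IC0 IC IS IG Ia Ib.
case: (runAB tt (L A) (L B) es) => a b /= IA IB IC0 IC IS IG Ia Ib.
rewrite /chooseABC /stepAB /=.
have [h1|h1] := leqP (a + x) tt.
  by rewrite /= !eqxx eAB eAC !addn0; do 4?split=> //; try lia.
have [h2|h2] := leqP (b + x) tt.
  by rewrite /= !eqxx eBA eBC !addn0; do 4?split=> //; try lia.
rewrite /= !eqxx eCA eCB !addn0.
have hC' : load_after L f es C + x <= tt.
  case: IG => IG; lia.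
by do 4?split=> //; try lia.
Qed.

Theorem mainTheorem2 (m t g : nat) (L : 'I_m -> nat) (I : seq nat) (A B : 'I_m) :
  4 <= m -> 0 < t -> 0 < g -> g + 1 <= t ->
  is_config L I ->
  (forall b : 'I_m, L b <= t - 1) ->
  A != B ->
  (m - 2) * g - 2 * (t - 1 - g) - 1 <= \sum_(b : 'I_m | (b != A) && (b != B)) L b ->
  (exists C : 'I_m, [/\ C != A, C != B & L C < t - 1 - g]) ->
  alg_wins t g L I.
Proof.
move=> hm ht hg htg Hc HL AB Hs [C [CA CB HC]].
exists (ruleABC A B C (t - 1) (L A) (L B)) => es _ Hp d.
have Hsum := pack_sum Hp; rewrite sumn_cat -(config_sum Hc) in Hsum.
have Hle := pack_le Hp; rewrite all_cat in Hle; case/andP: Hle => _ Hle.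
have Hsplit : \sum_(b : 'I_m) L b = L A + L B + \sum_(b : 'I_m | (b != A) && (b != B)) L b.
  by rewrite (bigD1 A) //= (bigD1 B) 1?eq_sym //= addnA.
have Hmg : m * g = (m - 2) * g + 2 * g by rewrite -mulnDl subnK // (leq_trans _ hm).
have [IA IB Id Ia [Ib IC0 IC IS IG]] :=
  @inv_main m L A B C (t - 1) g (ruleABC A B C (t - 1) (L A) (L B)) (frefl _)
    AB CA CB (HL A) (HL B) ltac:(lia) es ltac:(lia) Hle.
have [->|dA] := eqVneq d A; first by rewrite IA.
have [->|dB] := eqVneq d B; first by rewrite IB.
have [->|dC] := eqVneq d C; first by [].
by rewrite Id.
Qed.
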